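(* Let $a$ be a real number with $|a|<1$, let $n$ be a real number and $i$ a nonnegative integer, and put $\Theta(\varphi)=\dfrac{1+a^2-2a\cos\varphi}{1-a^2}$. Then $$\binom{n}{i}\int_0^{\pi}\frac{\cos(i\varphi)}{\Theta(\varphi)^{n+1}}\,d\varphi=\binom{-n-1}{i}\int_0^{\pi}\Theta(\varphi)^{n}\cos(i\varphi)\,d\varphi .$$
   Context: For a real number $m$ and a nonnegative integer $k$, $\binom{m}{k}=\frac{m(m-1)\cdots(m-k+1)}{k!}$ is the coefficient of $v^k$ in the binomial expansion of $(1+v)^m$. *)

(* Defs.v *)
From Stdlib Require Import Reals Arith.
From Coquelicot Require Import Coquelicot.
Open Scope R_scope.

Fixpoint falling (m : R) (k : nat) : R :=
  match k with
  | O => 1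
  | S k' => falling m k' * (m - INR k')
  end.

Definition gbinom (m : R) (k : nat) : R := falling m k / INR (Factorial.fact k).

Definition Theta (a phi : R) : R := (1 + a ^ 2 - 2 * a * cos phi) / (1 - a ^ 2).

(* Main.v *)
Require Import Defs.
From Stdlib Require Import Reals Arith Lra Lia Psatz.
From Coquelicot Require Import Coquelicot.
Open Scope R_scope.

Lemma D_pos (a x : R) : Rabs a < 1 -> 0 < 1 + a ^ 2 - 2 * a * cos x.
Proof.
  intros ha. pose proof (COS_bound x) as [H1 H2].
  destruct (Rcase_abs a) as [Hn|Hp].
  - rewrite Rabs_left in ha by lra. nra.
  - rewrite Rabs_right in ha by lra. nra.
Qed.

Lemma den_pos (a : R) : Rabs a < 1 -> 0 < 1 - a ^ 2.
Proof. intros ha. destruct (Rcase_abs a); [rewrite Rabs_left in ha|rewrite Rabs_right in ha]; nra. Qed.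

Lemma Theta_pos (a x : R) : Rabs a < 1 -> 0 < Theta a x.
Proof. intros ha. unfold Theta. apply Rdiv_lt_0_compat; [apply D_pos|apply den_pos]; auto. Qed.

Definition h (a s : R) (j : nat) (x : R) := Rpower (Theta a x) s * cos (INR j * x).
Definition I (a s : R) (j : nat) := RInt (h a s j) 0 PI.

Lemma h_der (a s : R) (j : nat) x : Rabs a < 1 -> ex_derive (h a s j) x.
Proof.
  intros ha. unfold h, Rpower, Theta. auto_derive.
  apply (Theta_pos a x ha).
Qed.

Lemma h_isI (a s : R) (j : nat) : Rabs a < 1 -> is_RInt (h a s j) 0 PI (I a s j).
Proof.
  intros ha. unfold I. apply (@RInt_correct R_CompleteNormedModule), (@ex_RInt_continuous R_CompleteNormedModule). intros z _.
  apply (@ex_derive_continuous R_AbsRing R_NormedModule), h_der, ha.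
Qed.
Lemma exp_s1 s t : 0 < t -> exp ((s+1) * ln t) = exp (s * ln t) * t.
Proof. intros. rewrite Rmult_plus_distr_r, exp_plus, Rmult_1_l, exp_ln; auto. Qed.
Lemma deriv_F : forall a s k x, Rabs a < 1 -> is_derive (fun x => Rpower (Theta a x) (s+1) * sin (INR (S k) * x)) x
  (2*a/(1-a^2)/2*(s-INR k)* h a s k x - 2*a/(1-a^2)/2*(s+2+INR k)* h a s (S (S k)) x + (INR k+1)*((1+a^2)/(1-a^2))* h a s (S k) x).
intros a s k x ha. pose proof (Theta_pos a x ha) as Tp. pose proof (den_pos a ha) as dp. pose proof (D_pos a x ha) as Dp. unfold h, Rpower. rewrite !S_INR. set (K := INR k). unfold Theta in *. auto_derive. { exact Tp. }
replace (1 + a*(a*1) + -(2*a*cos x)) with (1+a^2-2*a*cos x) by ring.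
replace (1 - a*(a*1)) with (1-a^2) by ring.
change ((1+a^2-2*a*cos x) * / (1-a^2)) with ((1+a^2-2*a*cos x) / (1-a^2)).
rewrite exp_s1 by exact Tp.
set (E := exp (s * ln ((1 + a ^ 2 - 2 * a * cos x) / (1 - a ^ 2)))).
replace (cos ((K + 1 + 1) * x)) with (cos ((K+1)*x) * cos x - sin ((K+1)*x) * sin x) by (rewrite <- cos_plus; f_equal; ring).
replace (cos (K * x)) with (cos ((K+1)*x) * cos x + sin ((K+1)*x) * sin x) by (rewrite <- cos_minus; f_equal; ring).
field. lra. 
Qed.
Lemma sin_nPI k : sin (INR k * PI) = 0.
Proof. apply sin_eq_0_1. exists (Z.of_nat k). rewrite INR_IZR_INZ. reflexivity. Qed.

Lemma rec (a s : R) (k : nat) : Rabs a < 1 ->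
  2*a/(1-a^2)/2*(s-INR k)* I a s k - 2*a/(1-a^2)/2*(s+2+INR k)* I a s (S (S k)) + (INR k+1)*((1+a^2)/(1-a^2))* I a s (S k) = 0.
Proof.
  intros ha.
  set (df := fun x => 2*a/(1-a^2)/2*(s-INR k)* h a s k x - 2*a/(1-a^2)/2*(s+2+INR k)* h a s (S (S k)) x + (INR k+1)*((1+a^2)/(1-a^2))* h a s (S k) x).
  set (F := fun x => Rpower (Theta a x) (s+1) * sin (INR (S k) * x)).
  assert (H1 : is_RInt df 0 PI (minus (F PI) (F 0))).
  { apply (@is_RInt_derive R_CompleteNormedModule).
    - intros x _. apply deriv_F. exact ha.
    - intros x _. apply (@ex_derive_continuous R_AbsRing R_NormedModule).
      unfold df, h, Rpower, Theta. auto_derive. repeat split; apply (Theta_pos a x ha). }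
  assert (H2 : is_RInt df 0 PI (2*a/(1-a^2)/2*(s-INR k)* I a s k - 2*a/(1-a^2)/2*(s+2+INR k)* I a s (S (S k)) + (INR k+1)*((1+a^2)/(1-a^2))* I a s (S k))).
  { apply (is_RInt_plus (V:=R_NormedModule)). apply (is_RInt_minus (V:=R_NormedModule)).
    all: apply (is_RInt_scal (V:=R_NormedModule)); apply h_isI; exact ha. }
  apply (@is_RInt_unique R_CompleteNormedModule) in H1. apply (@is_RInt_unique R_CompleteNormedModule) in H2. rewrite <- H2, H1.
  unfold F. rewrite Rmult_0_r, sin_0, Rmult_0_r, (Rmult_comm (INR (S k)) PI), <- (Rmult_comm (INR (S k))), sin_nPI, Rmult_0_r.
  unfold minus, plus, opp; simpl. ring.
Qed.

Lemma deriv_G : forall a s x, Rabs a < 1 -> is_derive (fun x => 2*a/(1-a^2) * Rpower (Theta a x) (s+1) * sin x) x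
  (-(s+1) * h a s 0 x + (2*s+3)*((1+a^2)/(1-a^2)) * h a (s+1) 0 x - (s+2) * h a (s+1+1) 0 x).
Proof.
intros a s x ha. pose proof (Theta_pos a x ha) as Tp. pose proof (den_pos a ha) as dp. pose proof (D_pos a x ha) as Dp. unfold h, Rpower. simpl INR. rewrite Rmult_0_l, cos_0.
unfold Theta in *. auto_derive. { exact Tp. }
replace (1 + a*(a*1) + -(2*a*cos x)) with (1+a^2-2*a*cos x) by ring.
replace (1 - a*(a*1)) with (1-a^2) by ring.
change ((1+a^2-2*a*cos x) * / (1-a^2)) with ((1+a^2-2*a*cos x) / (1-a^2)).
rewrite !exp_s1 by exact Tp.
set (E := exp (s * ln ((1 + a ^ 2 - 2 * a * cos x) / (1 - a ^ 2)))).
pose proof (sin2_cos2 x) as Hsc. unfold Rsqr in Hsc.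
match goal with |- ?L = ?R => assert (HH : L - R = (s+1)*(2*a/(1-a^2))^2 * E * (sin x * sin x + cos x * cos x - 1)) end.
{ field. lra. }
rewrite Hsc in HH. lra.
Qed.

Lemma rec0 (a s : R) : Rabs a < 1 ->
  -(s+1) * I a s 0 + (2*s+3)*((1+a^2)/(1-a^2)) * I a (s+1) 0 - (s+2) * I a (s+1+1) 0 = 0.
Proof.
  intros ha.
  set (df := fun x => -(s+1) * h a s 0 x + (2*s+3)*((1+a^2)/(1-a^2)) * h a (s+1) 0 x - (s+2) * h a (s+1+1) 0 x).
  set (F := fun x => 2*a/(1-a^2) * Rpower (Theta a x) (s+1) * sin x).
  assert (H1 : is_RInt df 0 PI (minus (F PI) (F 0))).
  { apply (@is_RInt_derive R_CompleteNormedModule).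
    - intros x _. apply deriv_G. exact ha.
    - intros x _. apply (@ex_derive_continuous R_AbsRing R_NormedModule).
      unfold df, h, Rpower, Theta. auto_derive. repeat split; apply (Theta_pos a x ha). }
  assert (H2 : is_RInt df 0 PI (-(s+1) * I a s 0 + (2*s+3)*((1+a^2)/(1-a^2)) * I a (s+1) 0 - (s+2) * I a (s+1+1) 0)).
  { apply (is_RInt_minus (V:=R_NormedModule)). apply (is_RInt_plus (V:=R_NormedModule)).
    all: apply (is_RInt_scal (V:=R_NormedModule)); apply h_isI; exact ha. }
  apply (@is_RInt_unique R_CompleteNormedModule) in H1. apply (@is_RInt_unique R_CompleteNormedModule) in H2. rewrite <- H2, H1.
  unfold F. rewrite sin_0, sin_PI. unfold minus, plus, opp; simpl. ring.
Qed.

Lemma lin1 (a s : R) : Rabs a < 1 ->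
  2*a/(1-a^2) * I a s 1 = (1+a^2)/(1-a^2) * I a s 0 - I a (s+1) 0.
Proof.
  intros ha.
  assert (H2 : is_RInt (fun x => (1+a^2)/(1-a^2) * h a s 0 x - h a (s+1) 0 x) 0 PI ((1+a^2)/(1-a^2) * I a s 0 - I a (s+1) 0)).
  { apply (is_RInt_minus (V:=R_NormedModule)). apply (is_RInt_scal (V:=R_NormedModule)).
    all: apply h_isI; exact ha. }
  assert (H3 : is_RInt (fun x => 2*a/(1-a^2) * h a s 1 x) 0 PI (2*a/(1-a^2) * I a s 1)).
  { apply (is_RInt_scal (V:=R_NormedModule)). apply h_isI; exact ha. }
  apply (@is_RInt_unique R_CompleteNormedModule) in H2. apply (@is_RInt_unique R_CompleteNormedModule) in H3.
  rewrite <- H2, <- H3. apply RInt_ext. intros x _.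
  pose proof (Theta_pos a x ha) as Tp. pose proof (den_pos a ha) as dp.
  unfold h, Rpower. rewrite exp_s1 by exact Tp. simpl INR. rewrite Rmult_0_l, Rmult_1_l, cos_0.
  unfold Theta. match goal with |- ?L = ?RR => change (@eq R L RR) end. field; lra.
Qed.

Lemma w_pos a x : Rabs a < 1 -> 0 < 1 - a * cos x.
Proof. intros ha. pose proof (COS_bound x) as [H1 H2].
  destruct (Rcase_abs a) as [Hn|Hp]; [rewrite Rabs_left in ha|rewrite Rabs_right in ha]; nra. Qed.

Lemma cos_x2atan x u : cos (x + 2 * atan u) = (cos x * (1 - u*u) - 2*u*sin x) / (1 + u*u).
Proof.
  rewrite cos_plus, cos_2a, sin_2a, cos_atan, sin_atan.
  assert (Hp : 0 < 1 + u²) by (unfold Rsqr; nra).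
  pose proof (sqrt_sqrt _ (Rlt_le _ _ Hp)) as Hq. pose proof (sqrt_lt_R0 _ Hp) as Hq0.
  set (q := sqrt (1 + u²)) in *. unfold Rsqr in *.
  replace (1 / q * (1 / q) - u / q * (u / q)) with ((1 - u*u)/(q*q)) by (field; lra).
  replace (2 * (u / q) * (1 / q)) with (2*u/(q*q)) by (field; lra).
  rewrite Hq. field. lra.
Qed.

Definition g a x := x + 2 * atan (a * sin x / (1 - a * cos x)).

Lemma Theta_g a x : Rabs a < 1 -> Theta (-a) (g a x) = / Theta a x.
Proof.
  intros ha.  pose proof (D_pos a x ha) as Dp. pose proof (den_pos a ha) as dp.
  pose proof (sin2_cos2 x) as HE. unfold Rsqr in HE.
  unfold Theta, g. rewrite cos_x2atan.
  pose proof (w_pos a x ha) as wp. set (c := cos x) in *. set (y := sin x) in *. clearbody c y.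
  assert (Np : 0 < (1-a*c)*(1-a*c) + a*a*y*y) by nra.
  match goal with |- ?L = ?RR => assert (HH : L - RR = a^2*(((1+a^2-2*a*c)-4*(1-a*c))*(1+a^2-2*a*c) - (1-a^2)^2)/((1-a^2)*((1-a*c)*(1-a*c) + a*a*y*y)*(1+a^2-2*a*c)) * (y*y + c*c - 1)) end.
  { field. repeat split; nra. }
  replace (y*y + c*c - 1) with 0 in HH by lra. rewrite Rmult_0_r in HH. lra.
Qed.

Lemma g_der a x : Rabs a < 1 -> is_derive (g a) x (/ Theta a x).
Proof.
  intros ha. pose proof (w_pos a x ha) as wp. pose proof (D_pos a x ha) as Dp. pose proof (den_pos a ha) as dp.
  pose proof (sin2_cos2 x) as HE. unfold Rsqr in HE.
  unfold g. auto_derive. { lra. }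
  unfold Theta.
  set (c := cos x) in *. set (y := sin x) in *. clearbody c y.
  assert (Np : 0 < (1-a*c)*(1-a*c) + a*a*y*y) by nra.
  match goal with |- ?L = ?RR => assert (HH : L - RR = -a^2*((1+a^2-2*a*c) + 1 - a^2)/(((1-a*c)*(1-a*c) + a*a*y*y)*(1+a^2-2*a*c)) * (y*y + c*c - 1)) end.
  { field. repeat split; nra. }
  replace (y*y + c*c - 1) with 0 in HH by lra. rewrite Rmult_0_r in HH. lra.
Qed.

Lemma reflect_I a n : Rabs a < 1 -> RInt (fun y => Rpower (Theta (-a) y) n) 0 PI = I a n 0.
Proof.
  intros ha.
  assert (H0 : is_RInt (h a n 0) (-1*PI+PI) (-1*0+PI) (I a n 0)).
  { replace (-1*PI+PI) with 0 by ring. replace (-1*0+PI) with PI by ring. apply h_isI; exact ha. }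
  apply (is_RInt_comp_lin (V:=R_NormedModule)) in H0.
  apply (is_RInt_swap (V:=R_NormedModule)) in H0.
  apply (is_RInt_scal (V:=R_NormedModule)) with (k := -1) in H0.
  apply (@is_RInt_unique R_CompleteNormedModule).
  replace (I a n 0) with (scal (-1) (opp (I a n 0))) by (unfold scal, opp; simpl; unfold mult; simpl; ring).
  apply (is_RInt_ext (V:=R_NormedModule)) with (2 := H0).
  intros x _. unfold h, scal; simpl; unfold mult; simpl. rewrite Rmult_0_l, cos_0.
  unfold Theta. replace (cos (-1 * x + PI)) with (- cos x).
  - replace ((- a) ^ 2) with (a^2) by ring. replace (2 * - a * cos x) with (2 * a * - cos x) by ring. ring.
  - replace (-1 * x + PI) with (PI - x) by ring. rewrite cos_minus, cos_PI, sin_PI. ring.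
Qed.

Lemma Rpower_inv t n : 0 < t -> / t * Rpower (/ t) n = Rpower t (-n-1).
Proof.
  intros Ht. unfold Rpower. rewrite ln_Rinv by exact Ht.
  replace (n * - ln t) with ((-n-1+1) * ln t) by ring. rewrite exp_s1 by exact Ht. field. lra.
Qed.

Lemma P0 a n : Rabs a < 1 -> I a (-n-1) 0 = I a n 0.
Proof.
  intros ha. rewrite <- (reflect_I a n ha).
  assert (ha' : Rabs (-a) < 1) by (rewrite Rabs_Ropp; exact ha).
  assert (HC : is_RInt (fun y => scal (/ Theta a y) ((fun y => Rpower (Theta (-a) y) n) (g a y))) 0 PI
                 (RInt (fun y => Rpower (Theta (-a) y) n) (g a 0) (g a PI))).
  { apply (@is_RInt_comp R_CompleteNormedModule (fun y => Rpower (Theta (-a) y) n) (g a) (fun y => / Theta a y)).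
    - intros x _. apply (@ex_derive_continuous R_AbsRing R_NormedModule).
      unfold Rpower, Theta. auto_derive. apply (Theta_pos (-a) (g a x) ha').
    - intros x _. split. { apply g_der, ha. }
      apply (@ex_derive_continuous R_AbsRing R_NormedModule).
      pose proof (Theta_pos a x ha) as Tp. unfold Theta in Tp. unfold Theta. auto_derive.
      apply Rgt_not_eq. replace (1 + a * (a * 1) + - (2 * a * cos x)) with (1+a^2-2*a*cos x) by ring.
      replace (1 - a*(a*1)) with (1-a^2) by ring. exact Tp. }
  replace (g a 0) with 0 in HC by (unfold g; rewrite sin_0, Rmult_0_r, Rdiv_0_l, atan_0; ring).
  replace (g a PI) with PI in HC by (unfold g; rewrite sin_PI, Rmult_0_r, Rdiv_0_l, atan_0; ring).
  apply (@is_RInt_unique R_CompleteNormedModule) in HC. rewrite <- HC.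
  unfold I. apply RInt_ext. intros x _. unfold h, scal; simpl; unfold mult; simpl.
  rewrite Rmult_0_l, cos_0, Rmult_1_r, Theta_g by exact ha.
  rewrite Rpower_inv. reflexivity. apply Theta_pos, ha.
Qed.

Lemma Q_all a n : Rabs a < 1 -> forall i, falling n i * I a (-n-1) i = falling (-n-1) i * I a n i.
Proof.
  intros ha. pose proof (den_pos a ha) as dp.
  destruct (Req_dec a 0) as [a0|an0].
  - intros [|k].
    + simpl. rewrite P0 by exact ha. ring.
    + assert (Z : forall s, I a s (S k) = 0).
      { intros s. pose proof (rec a s k ha) as Hr. rewrite a0 in Hr.
        replace (2 * 0 / (1 - 0 ^ 2) / 2) with 0 in Hr by field.
        replace ((1 + 0 ^ 2) / (1 - 0 ^ 2)) with 1 in Hr by field.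
        pose proof (pos_INR k). rewrite a0.
        apply (Rmult_eq_reg_l (INR k + 1)); [|lra]. lra. }
      rewrite !Z. ring.
  - set (b := 2*a/(1-a^2)). set (c := (1+a^2)/(1-a^2)).
    assert (bn : b <> 0) by (unfold b; intro Hb; apply an0; unfold Rdiv in Hb; apply Rmult_integral in Hb; destruct Hb as [Hb|Hb]; [lra|]; exfalso; revert Hb; apply Rinv_neq_0_compat; lra).
    assert (H01 : forall k, falling n k * I a (-n-1) k = falling (-n-1) k * I a n k /\
                      falling n (S k) * I a (-n-1) (S k) = falling (-n-1) (S k) * I a n (S k)).
    { induction k as [|k [IH1 IH2]].
      - split.
        + simpl. rewrite P0 by exact ha. ring.
        + simpl. rewrite !Rmult_1_l, !Rminus_0_r.
          apply (Rmult_eq_reg_l b); [|exact bn].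
          replace (b * (n * I a (-n-1) 1)) with (n * (b * I a (-n-1) 1)) by ring.
          replace (b * ((-n-1) * I a n 1)) with ((-n-1) * (b * I a n 1)) by ring.
          unfold b. rewrite !lin1 by exact ha. fold c.
          rewrite P0 by exact ha.
          pose proof (P0 a (n-1) ha) as P0'. replace (-(n-1)-1) with (-n-1+1) in P0' by ring.
          rewrite P0'.
          pose proof (rec0 a (n-1) ha) as R0. replace (n-1+1) with n in R0 by ring.
          fold c in R0. lra.
      - split; [exact IH2|].
        pose proof (rec a n k ha) as Rn. pose proof (rec a (-n-1) k ha) as Rm. fold b c in Rn, Rm.
        cbn [falling]. cbn [falling] in IH2.
        rewrite S_INR in *. set (K := INR k) in *.
        set (Fn := falling n k) in *. set (Fm := falling (-n-1) k) in *.
        apply (Rmult_eq_reg_l (b/2)); [|intro; apply bn; lra].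
        replace (b / 2 * (Fn * (n - K) * (n - (K + 1)) * I a (-n-1) (S (S k))))
          with (- (Fn * (n - K)) * (b/2 * (-n-1+2+K) * I a (-n-1) (S (S k)))) by ring.
        replace (b / 2 * (Fm * (-n-1 - K) * (-n-1 - (K + 1)) * I a n (S (S k))))
          with (- (Fm * (-n-1 - K)) * (b/2 * (n+2+K) * I a n (S (S k)))) by ring.
        replace (b/2 * (-n-1+2+K) * I a (-n-1) (S (S k))) with (b/2*(-n-1-K) * I a (-n-1) k + (K+1)*c*I a (-n-1) (S k)) by lra.
        replace (b/2 * (n+2+K) * I a n (S (S k))) with (b/2*(n-K) * I a n k + (K+1)*c*I a n (S k)) by lra.
        replace (- (Fn * (n - K)) * (b / 2 * (-n-1-K) * I a (-n-1) k + (K + 1) * c * I a (-n-1) (S k)))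
          with (- (b/2*(n-K)*(-n-1-K)) * (Fn * I a (-n-1) k) - (K+1)*c*(Fn * (n-K) * I a (-n-1) (S k))) by ring.
        rewrite IH1, IH2. ring. }
    intros i. apply H01.
Qed.

Theorem mainTheorem3 (a n : R) (i : nat) (ha : Rabs a < 1) :
  gbinom n i * RInt (fun phi => cos (INR i * phi) / Rpower (Theta a phi) (n + 1)) 0 PI
  = gbinom (- n - 1) i * RInt (fun phi => Rpower (Theta a phi) n * cos (INR i * phi)) 0 PI.
Proof.
  assert (HL : RInt (fun phi => cos (INR i * phi) / Rpower (Theta a phi) (n + 1)) 0 PI = I a (-n-1) i).
  { unfold I. apply RInt_ext. intros x _. unfold h.
    match goal with |- ?L = ?RR => change (@eq R L RR) end.
    replace (-n-1) with (-(n+1)) by ring. rewrite Rpower_Ropp. unfold Rdiv. ring. }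
  change (RInt (fun phi => Rpower (Theta a phi) n * cos (INR i * phi)) 0 PI) with (I a n i).
  rewrite HL. unfold gbinom.
  replace (falling n i / INR (fact i) * I a (- n - 1) i) with (/ INR (fact i) * (falling n i * I a (- n - 1) i)) by (unfold Rdiv; ring).
  rewrite Q_all by exact ha. unfold Rdiv. ring.
Qed.
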